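(* Let $\pi_E$ be a deterministic expert policy in a finite MDP whose induced chain $P_E$ is irreducible and aperiodic, with stationary state-action distribution $\rho^E$ and mixing time $\tau_{\mathrm{mix}}$. Generate an expert trajectory $s_1,a_1,\dots,s_N,a_N$, let $D$ be the set of state-action pairs it visits, and define $R_{\mathrm{int}}(s,a)=\mathbb{1}\{(s,a)\in D\}$. Then for every $\epsilon>0$, with probability at least $1-2\exp\!\big(-\frac{\epsilon^2N}{4.5\,\tau_{\mathrm{mix}}}\big)$ the dataset is such that $\mathbb{E}_{\rho^E}[R_{\mathrm{int}}]\ge 1-\epsilon-\sqrt{8|S|\tau_{\mathrm{mix}}/N}$, and consequently any policy $\pi_I$ (inducing an irreducible aperiodic chain, with stationary state-action distribution $\rho^I$) that maximizes the expected per-step intrinsic reward, in the sense that $\mathbb{E}_{\rho^I}[R_{\mathrm{int}}]\ge\mathbb{E}_{\rho^E}[R_{\mathrm{int}}]$, satisfies $$\mathbb{E}_{\rho^I}[R_{\mathrm{int}}]\;\ge\;1-\epsilon-\sqrt{\frac{8|S|\tau_{\mathrm{mix}}}{N}}.$$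
   Context: A policy $\pi$ in a finite MDP (states $S$, actions $A$, kernel $T$) induces the chain $P_\pi(s,s')=\sum_a\pi(a\mid s)T(s'\mid s,a)$; if irreducible and aperiodic it has stationary distribution $\rho^\pi_S$ and stationary state-action distribution $\rho^\pi(s,a)=\rho^\pi_S(s)\pi(a\mid s)$; $\mathbb{E}_{\rho^\pi}[R]=\sum_{s,a}\rho^\pi(s,a)R(s,a)$. Here $P_E=P_{\pi_E}$, $\rho^E=\rho^{\pi_E}$, $\rho^E_S=\rho^{\pi_E}_S$, $\rho^I=\rho^{\pi_I}$. The mixing time $\tau_{\mathrm{mix}}$ is the smallest integer $t\ge0$ with $\max_{s'}\|\mathbb{1}(s')^\top P_E^t-\rho^E_S\|_{\mathrm{TV}}\le\tfrac14$, where $\|\rho_1-\rho_2\|_{\mathrm{TV}}=\sup_{M}|\rho_1(M)-\rho_2(M)|$. The trajectory is generated by running $\pi_E$ in the MDP. *)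

(* Defs.v *)
From HB Require Import structures.
From mathcomp Require Import all_boot all_order all_algebra.
From mathcomp Require Import boolp reals.
From mathcomp Require Import sequences exp.
Set Implicit Arguments. Unset Strict Implicit. Unset Printing Implicit Defensive.
Import Order.TTheory GRing.Theory Num.Theory.
Local Open Scope ring_scope.

Section MDP.
Variables (R : realType) (S A : finType).

Definition is_distr (T : finType) (p : T -> R) :=
  (forall x, 0 <= p x) /\ \sum_x p x = 1.

Definition is_kernel (T : S -> A -> S -> R) := forall s a, is_distr (T s a).

Definition is_policy (pi : S -> A -> R) := forall s, is_distr (pi s).

Definition det_policy (piE : S -> A) : S -> A -> R :=
  fun s a => (a == piE s)%:R.

Definition induced_chain (T : S -> A -> S -> R) (pi : S -> A -> R) : S -> S -> R :=
  fun s s' => \sum_a pi s a * T s a s'.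

Fixpoint mpow (P : S -> S -> R) (t : nat) : S -> S -> R :=
  match t with
  | 0 => fun s s' => (s == s')%:R
  | t'.+1 => fun s s' => \sum_u mpow P t' s u * P u s'
  end.

Definition irreducible (P : S -> S -> R) :=
  forall s s', exists t, 0 < mpow P t s s'.

(* every state has period 1: no d > 1 divides all return times *)
Definition aperiodic (P : S -> S -> R) :=
  forall s (d : nat), (1 < d)%N ->
    exists t : nat, [/\ (0 < t)%N, 0 < mpow P t s s & ~~ (d %| t)%N].

Definition is_stationary (P : S -> S -> R) (rho : S -> R) :=
  is_distr rho /\ forall s', \sum_s rho s * P s s' = rho s'.

Definition sa_dist (rhoS : S -> R) (pi : S -> A -> R) : S * A -> R :=
  fun sa => rhoS sa.1 * pi sa.1 sa.2.

Definition expect (rho : S * A -> R) (Rw : S * A -> R) :=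
  \sum_(sa : S * A) rho sa * Rw sa.

Definition tv (p q : S -> R) : R :=
  \big[Num.max/0]_(M : {set S}) `|\sum_(x in M) p x - \sum_(x in M) q x|.

Definition mixed_at (P : S -> S -> R) (rho : S -> R) (t : nat) :=
  forall s', tv (mpow P t s') rho <= 4^-1.

Definition is_mixing_time (P : S -> S -> R) (rho : S -> R) (tau : nat) :=
  mixed_at P rho tau /\ forall t, (t < tau)%N -> ~ mixed_at P rho t.

Fixpoint path_prob (P : S -> S -> R) (s : S) (xs : seq S) : R :=
  match xs with
  | [::] => 1
  | y :: ys => P s y * path_prob P y ys
  end.

Definition traj_prob (mu : S -> R) (P : S -> S -> R) (xs : seq S) : R :=
  match xs with
  | [::] => 1
  | s :: ys => mu s * path_prob P s ys
  end.

(* intrinsic reward: indicator of the set D of visited state-action pairs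
   (s_i, a_i) = (s_i, piE s_i) *)
Definition R_int (piE : S -> A) (xs : seq S) : S * A -> R :=
  fun sa => (sa \in [seq (s, piE s) | s <- xs])%:R.

End MDP.

Arguments det_policy {R S A}.
Arguments R_int {R S A}.

(* Main.v *)
Require Import Defs.
From HB Require Import structures.
From mathcomp Require Import all_boot all_order all_algebra.
From mathcomp Require Import boolp reals.
From mathcomp Require Import sequences exp.
From mathcomp Require Import ring lra.
Import Order.TTheory GRing.Theory Num.Theory.
Local Open Scope ring_scope.
Set Implicit Arguments. Unset Strict Implicit. Unset Printing Implicit Defensive.

Lemma sum_tupleS (R : realType) (S : finType) n (F : n.+1.-tuple S -> R) :
  \sum_(t : n.+1.-tuple S) F t = \sum_(x : S) \sum_(t : n.-tuple S) F [tuple of x :: t].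
Proof.
rewrite pair_bigA /=.
rewrite (reindex (fun p : S * n.-tuple S => [tuple of p.1 :: p.2])) //=.
exists (fun t : n.+1.-tuple S => (thead t, [tuple of behead t])).
  by case=> x t _; congr pair; apply/val_inj.
move=> t _; apply/val_inj => /=.
by case: t => [[|x s] //= _].
Qed.

Lemma eqle (R : realType) (x y : R) : x = y -> x <= y.
Proof. by move->. Qed.

Lemma num_ineq (R : realType) (eps c m j K t N s : R) : 0 < eps -> 0 <= c -> m = eps + c ->
  1 <= t -> 1 <= s -> 0 <= K -> 0 <= j -> (j+1)* m <= 1 ->
  N <= K*(j+1)*t + (j+1)*t -> c^+2 * N = 8*s*t -> 0 < N ->
  s - K * m / 2 <= - (eps ^+ 2 * N) / (45%:R / 10%:R * t).
Proof.
move=> he hc hm ht hs hK hj hjm hN hc2 hN0.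
have hm0 : 0 <= m by lra.
have h1 : m * N <= K*t + t.
  have : m * N <= m * (K*(j+1)*t + (j+1)*t) by rewrite ler_wpM2l.
  have : 0 <= (K*t + t) * (1 - (j+1) * m) by rewrite mulr_ge0 //; nra.
  nra.
have hm1 : m <= 1 by nra.
have h2 : 2 * (eps ^+ 2 * N) <= 9 * (t * (K * m / 2 - s)).
  have e1 : m * (m * N) <= m * (K * t + t) by rewrite ler_wpM2l.
  have e2 : 0 <= eps * c * N by rewrite !mulr_ge0 //; lra.
  have e3 : 0 <= eps^+2 * N by rewrite mulr_ge0 // ?sqr_ge0; lra.
  have e4 : m * t <= t by nra.
  have e5 : t <= s * t by nra.
  subst m. nra.
have ht0 : 0 < 45%:R / 10%:R * t by rewrite mulr_gt0 // ?divr_gt0 ?ltr0n //; lra.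
have q : 45%:R / 10%:R = 9 / 2 :> R.
  by apply/eqP; rewrite eqr_div ?pnatr_eq0 // -!natrM.
rewrite ler_pdivlMr // q; nra.
Qed.

Section Chain.
Variables (R : realType) (S : finType) (P : S -> S -> R).
Hypothesis Pge0 : forall s s', 0 <= P s s'.
Hypothesis Prow : forall s, \sum_s' P s s' = 1.

Lemma mpow_ge0 t s s' : 0 <= mpow P t s s'.
Proof.
elim: t s s' => [|t IH] s s' /=; first by rewrite ler0n.
by apply: sumr_ge0 => u _; apply: mulr_ge0.
Qed.

Lemma mpow_row t s : \sum_s' mpow P t s s' = 1.
Proof.
elim: t s => [|t IH] s /=.
  by rewrite (bigD1 s) //= eqxx big1 ?addr0 // => u /negPf; rewrite eq_sym => ->.
rewrite exchange_big /= -(IH s); apply: eq_bigr => u _.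
by rewrite -mulr_sumr Prow mulr1.
Qed.

Lemma mpowD s t x y : mpow P (s + t) x y = \sum_u mpow P s x u * mpow P t u y.
Proof.
elim: t y => [|t IH] y /=.
  rewrite addn0 (bigD1 y) //= eqxx mulr1 big1 ?addr0 // => u /negPf.
  by rewrite eq_sym => ->; rewrite mulr0.
rewrite addnS /=.
under eq_bigr do rewrite IH mulr_suml.
rewrite exchange_big /=; apply: eq_bigr => u _.
by rewrite mulr_sumr; apply: eq_bigr => v _; rewrite mulrA.
Qed.

Lemma mpow1 x y : mpow P 1 x y = P x y.
Proof.
rewrite /= (bigD1 x) //= eqxx mul1r big1 ?addr0 // => u /negPf.
by rewrite eq_sym => ->; rewrite mul0r.
Qed.

Variable rho : S -> R.
Hypothesis rho_stat : is_stationary P rho.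

Lemma mpow_stat t y : \sum_u rho u * mpow P t u y = rho y.
Proof.
elim: t y => [|t IH] y /=.
  rewrite (bigD1 y) //= eqxx mulr1 big1 ?addr0 // => u /negPf ->.
  by rewrite mulr0.
under eq_bigr do rewrite mulr_sumr.
rewrite exchange_big /= -[RHS](proj2 rho_stat y); apply: eq_bigr => v _.
by rewrite -IH mulr_suml; apply: eq_bigr => u _; rewrite mulrA.
Qed.

Definition dev t (d : R) := forall x (M : {set S}),
  `|\sum_(y in M) mpow P t x y - \sum_(y in M) rho y| <= d.

Lemma dev_mul s t d1 d2 : dev s d1 -> dev t d2 -> dev (s + t) (2 * d1 * d2).
Proof.
move=> Hs Ht x M.
have d2ge0 : 0 <= d2 by apply: le_trans (Ht x set0); rewrite !big_set0 subrr normr0.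
pose a u := mpow P s x u - rho u.
pose f u := \sum_(y in M) mpow P t u y - \sum_(y in M) rho y.
have key : \sum_(y in M) mpow P (s + t) x y - \sum_(y in M) rho y = \sum_u a u * f u.
  rewrite /a /f.
  set rM := \sum_(y in M) rho y.
  have E1 : \sum_u (mpow P s x u - rho u) * (\sum_(y in M) mpow P t u y - rM)
     = \sum_u mpow P s x u * (\sum_(y in M) mpow P t u y)
       - rM * \sum_u mpow P s x u
       - \sum_u rho u * (\sum_(y in M) mpow P t u y) + rM * \sum_u rho u.
    rewrite !mulr_sumr -!sumrB -big_split /=; apply: eq_bigr => u _; ring.
  rewrite E1 mpow_row.
  have -> : \sum_u rho u = 1 by case: rho_stat => [[]].
  have -> : \sum_u rho u * (\sum_(y in M) mpow P t u y) = rM.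
    under eq_bigr do rewrite mulr_sumr.
    rewrite exchange_big /=; apply: eq_bigr => y _; exact: mpow_stat.
  have -> : \sum_u mpow P s x u * (\sum_(y in M) mpow P t u y)
     = \sum_(y in M) mpow P (s + t) x y.
    under eq_bigr do rewrite mulr_sumr.
    by rewrite exchange_big /=; apply: eq_bigr => y _; rewrite mpowD.
  ring.
have suma : \sum_u a u = 0.
  by rewrite /a sumrB mpow_row; case: rho_stat => [[_ ->]]; rewrite subrr.
pose Mp := [set u | 0 < a u].
have HMp : \sum_(u in Mp) a u <= d1.
  have := Hs x Mp; rewrite -sumrB.
  by move/(le_trans (ler_norm _)).
have Hf u : - d2 <= f u <= d2 by rewrite -ler_norml; apply: Ht.
have HMp0 : 0 <= \sum_(u in Mp) a u.
  by apply: sumr_ge0 => u; rewrite inE => /ltW.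
have Hterm u : - (2 * d2) * (if u \in Mp then a u else 0) <= a u * (f u - d2)
   /\ a u * (f u + d2) <= (2 * d2) * (if u \in Mp then a u else 0).
  have /andP[h1 h2] := Hf u.
  rewrite inE; case: ltrP => hau; split; nra.
rewrite key ler_norml; apply/andP; split.
- have -> : \sum_u a u * f u = \sum_u a u * (f u - d2).
    by under [RHS]eq_bigr do rewrite mulrBr; rewrite sumrB -mulr_suml suma mul0r subr0.
  apply: (le_trans _ (ler_sum _ (fun u _ => proj1 (Hterm u)))).
  rewrite -mulr_sumr -big_mkcond /=; nra.
- have -> : \sum_u a u * f u = \sum_u a u * (f u + d2).
    by under [RHS]eq_bigr do rewrite mulrDr; rewrite big_split -mulr_suml /= suma mul0r addr0.
  apply: (le_trans (ler_sum _ (fun u _ => proj2 (Hterm u)))).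
  rewrite -mulr_sumr -big_mkcond /=; nra.
Qed.

Lemma tv_ge (p q : S -> R) (M : {set S}) :
  `|\sum_(x in M) p x - \sum_(x in M) q x| <= tv p q.
Proof. by rewrite /tv (bigD1 M) //= le_max lexx. Qed.

Lemma dev_tau tau : mixed_at P rho tau -> dev tau (4^-1).
Proof. by move=> H x M; apply: le_trans (H x); apply: tv_ge. Qed.

Lemma dev_le t d d' : d <= d' -> dev t d -> dev t d'.
Proof. by move=> h H x M; apply: le_trans (H x M) h. Qed.

Lemma dev_pow tau l : dev tau (4^-1) -> dev (l.+1 * tau) ((2 ^+ l.+2)^-1).
Proof.
move=> H; elim: l => [|l IH].
  rewrite mul1n; apply: dev_le H; apply: eqle; congr (_^-1); rewrite expr2 -natrM //.

rewrite mulSn; apply: dev_le (dev_mul H IH).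
rewrite !exprS; apply: eqle; field.
by rewrite expf_neq0 // pnatr_eq0.
Qed.

Variable B : {set S}.

Fixpoint avoid n s : R := match n with
  | 0 => 1
  | n'.+1 => \sum_y P s y * (y \notin B)%:R * avoid n' y end.

Lemma avoid_ge0 n s : 0 <= avoid n s.
Proof.
elim: n s => [|n IH] s /=; first exact: ler01.
by apply: sumr_ge0 => y _; rewrite !mulr_ge0 ?ler0n.
Qed.

Lemma avoid_le1 n s : avoid n s <= 1.
Proof.
elim: n s => [|n IH] s /=; first exact: lexx.
rewrite -[X in _ <= X](Prow s); apply: ler_sum => y _.
rewrite -mulrA ler_piMr //; case: (y \in B) => /=; rewrite ?mul0r ?mul1r // ?ler01.
Qed.

Lemma avoid_shift L n s :
  avoid (L.+1 + n) s <= \sum_y mpow P L.+1 s y * (y \notin B)%:R * avoid n y.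
Proof.
elim: L s => [|L IH] s.
  by rewrite add1n; apply: eqle; apply: eq_bigr => y _; rewrite mpow1.
rewrite addSn /=.
have -> : \sum_y mpow P (1 + L.+1) s y * (y \notin B)%:R * avoid n y
   = \sum_u P s u * \sum_y mpow P L.+1 u y * (y \notin B)%:R * avoid n y.
  under eq_bigr do rewrite mpowD !mulr_suml.
  rewrite exchange_big; apply: eq_bigr => u _.
  by rewrite mulr_sumr; apply: eq_bigr => y _; rewrite mpow1 !mulrA.
apply: ler_sum => u _.
rewrite -mulrA ler_wpM2l //.
have h0 : 0 <= \sum_y mpow P L.+1 u y * (y \notin B)%:R * avoid n y.
  by apply: sumr_ge0 => y _; rewrite !mulr_ge0 ?ler0n ?mpow_ge0 ?avoid_ge0.
case: (u \in B) => /=; rewrite ?mul0r ?mul1r //.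
exact: IH.
Qed.

Lemma sum_notin (f : S -> R) :
  \sum_y f y * (y \notin B)%:R = \sum_y f y - \sum_(y in B) f y.
Proof.
apply/eqP; rewrite eq_sym subr_eq [X in _ + X]big_mkcond /= -big_split /=; apply/eqP.
by apply: eq_bigr => y _; case: (y \in B) => /=; rewrite ?mulr0 ?mulr1 ?addr0 ?add0r.
Qed.

Lemma avoid_step L d n Mx s : dev L.+1 d -> 0 <= Mx -> (forall y, avoid n y <= Mx) ->
  avoid (L.+1 + n) s <= (1 - (\sum_(y in B) rho y - d)) * Mx.
Proof.
move=> Hd HM Hn; apply: le_trans (avoid_shift L n s) _.
apply: (@le_trans _ _ (\sum_y mpow P L.+1 s y * (y \notin B)%:R * Mx)).
  apply: ler_sum => y _; apply: ler_wpM2l => //.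
  by rewrite mulr_ge0 ?ler0n ?mpow_ge0.
rewrite -mulr_suml sum_notin mpow_row ler_wpM2r //.
have := Hd s B; rewrite ler_norml => /andP[h1 h2]; lra.
Qed.

Lemma avoid_pow L d k r s : dev L.+1 d ->
  avoid (k * L.+1 + r) s <= (1 - (\sum_(y in B) rho y - d)) ^+ k.
Proof.
move=> Hd; elim: k s => [|k IH] s; first by rewrite mul0n add0n expr0 avoid_le1.
rewrite mulSn -addnA exprS; apply: avoid_step => //.
rewrite exprn_ge0 //.
have := Hd s B; rewrite ler_norml => /andP[h1 h2].
have : \sum_(y in B) mpow P L.+1 s y <= 1.
  rewrite -[X in _ <= X](mpow_row L.+1 s) [X in _ <= X](bigID (mem B)) /= lerDl.
  by apply: sumr_ge0 => y _; exact: (mpow_ge0 L.+1 s y).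
lra.
Qed.

Lemma avoid_tuple n s : \sum_(ys : n.-tuple S) path_prob P s ys * (all (fun y => y \notin B) ys)%:R
  = avoid n s.
Proof.
elim: n s => [|n IH] s.
  rewrite (big_pred1 [tuple]) /= ?mulr1 // => t.
  by symmetry; apply/eqP; exact: tuple0.
rewrite sum_tupleS /=; apply: eq_bigr => y _.
rewrite -IH mulr_sumr; apply: eq_bigr => t _ /=.
by rewrite -mulnb natrM; ring.
Qed.

End Chain.

Lemma path_ge0 (R : realType) (S : finType) (P : S -> S -> R) :
  (forall s s', 0 <= P s s') -> forall xs s, 0 <= path_prob P s xs.
Proof. by move=> h; elim=> [|y ys IH] s //=; rewrite mulr_ge0. Qed.

Lemma traj_tuple (R : realType) (S : finType) (P : S -> S -> R) (mu : S -> R) (B : {set S}) n :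
  \sum_(xs : n.+1.-tuple S) traj_prob mu P xs * (all (fun y => y \notin B) xs)%:R
  = \sum_x mu x * (x \notin B)%:R * avoid P B n x.
Proof.
rewrite sum_tupleS; apply: eq_bigr => x _.
rewrite -avoid_tuple mulr_sumr; apply: eq_bigr => t _ /=.
by rewrite -mulnb natrM; ring.
Qed.

Lemma path_total (R : realType) (S : finType) (P : S -> S -> R) :
  (forall s, \sum_s' P s s' = 1) -> forall n s, \sum_(ys : n.-tuple S) path_prob P s ys = 1.
Proof.
move=> h; elim=> [|n IH] s.
  rewrite (big_pred1 [tuple]) //= => t.
  by symmetry; apply/eqP; exact: tuple0.
rewrite sum_tupleS -[RHS](h s); apply: eq_bigr => y _ /=.
by rewrite -mulr_sumr IH mulr1.
Qed.

Lemma sum_filter_le (R : realType) (I : finType) (P : pred I) (f h : I -> R) :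
  (forall i, P i -> f i <= h i) -> (forall i, 0 <= h i) ->
  \sum_(i | P i) f i <= \sum_i h i.
Proof.
move=> H1 H2; rewrite big_mkcond /=; apply: ler_sum => i _.
by case: ifP => // /H1.
Qed.

Lemma expect_eq (R : realType) (S A : finType) (rhoS : S -> R) (piE : S -> A) xs :
  expect (sa_dist rhoS (det_policy piE)) (R_int piE xs) = \sum_s rhoS s * (s \in xs)%:R.
Proof.
rewrite /expect.
transitivity (\sum_s \sum_a sa_dist rhoS (det_policy piE) (s, a) * R_int piE xs (s, a)).
  by rewrite pair_bigA; apply: eq_bigr => [[s a]] _.
apply: eq_bigr => s _.
rewrite (bigD1 (piE s)) //= big1 ?addr0.
  rewrite /sa_dist /det_policy /R_int /= eqxx mulr1; congr (_ * _%:R).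
  by rewrite (mem_map (f := fun s => (s, piE s))) // => x y [].
move=> a /negPf h; rewrite /sa_dist /det_policy /= h.
by rewrite mulr0 mul0r.
Qed.

Unset Implicit Arguments.

Theorem lemma5 (R : realType) (S A : finType)
  (T : S -> A -> S -> R) (piE : S -> A) (rhoES : S -> R) (tau : nat)
  (mu : S -> R) (N : nat) (eps : R) :
  is_kernel T ->
  irreducible (induced_chain T (det_policy piE)) ->
  aperiodic (induced_chain T (det_policy piE)) ->
  is_stationary (induced_chain T (det_policy piE)) rhoES ->
  is_mixing_time (induced_chain T (det_policy piE)) rhoES tau ->
  is_distr mu ->
  (0 < N)%N ->
  0 < eps ->
  let PE := induced_chain T (det_policy piE) in
  let rhoE := sa_dist rhoES (det_policy piE) in
  let bound := 1 - eps - Num.sqrt (8 * #|S|%:R * tau%:R / N%:R) in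
  \sum_(xs : N.-tuple S |
          (bound <= expect rhoE (R_int piE xs)) &&
          `[< forall (piI : S -> A -> R) (rhoIS : S -> R),
               is_policy piI ->
               irreducible (induced_chain T piI) ->
               aperiodic (induced_chain T piI) ->
               is_stationary (induced_chain T piI) rhoIS ->
               expect rhoE (R_int piE xs)
                 <= expect (sa_dist rhoIS piI) (R_int piE xs) ->
               bound <= expect (sa_dist rhoIS piI) (R_int piE xs) >])
     traj_prob mu PE xs
  >= 1 - 2 * expR (- (eps ^+ 2 * N%:R) / (45%:R / 10%:R * tau%:R)).
Proof.
move=> hT _ _ hstat hmix [mu0 mu1]; case: N => [|n] hN heps; first by rewrite ltnn in hN.
rewrite [is_true _]/=.
set PE := induced_chain T (det_policy piE).
set rhoE := sa_dist rhoES (det_policy piE).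
set bound := 1 - eps - _.
have PEE s s' : PE s s' = T s (piE s) s'.
  rewrite /PE /induced_chain (bigD1 (piE s)) //= /det_policy eqxx mul1r big1 ?addr0 //.
  by move=> a /negPf ->; rewrite mul0r.
have Pge0 s s' : 0 <= PE s s' by rewrite PEE; case: (hT s (piE s)) => h _; apply: h.
have Prow s : \sum_s' PE s s' = 1.
  by under eq_bigr do rewrite PEE; case: (hT s (piE s)).
have [rho0 rho1] := proj1 hstat.
have Sgt0 : (0 < #|S|)%N.
  case: (pickP (fun _ : S => true)) => [s0 _|h]; first by apply/card_gt0P; exists s0.
  by move: mu1; rewrite big_pred0 // => /eqP; rewrite eq_sym oner_eq0.
pose E (xs : n.+1.-tuple S) := \sum_s rhoES s * (s \in xs)%:R.
have rhoEE (xs : n.+1.-tuple S) : expect rhoE (R_int piE xs) = E xs by rewrite /rhoE expect_eq.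
rewrite (eq_bigl (fun xs : n.+1.-tuple S => bound <= E xs)); last first.
  move=> xs /=; rewrite rhoEE; apply/idP/idP => [/andP[]//|hb]; rewrite hb /=.
  by apply/asboolP => piI rhoIS _ _ _ _; apply: le_trans.
have traj0 xs : 0 <= traj_prob mu PE xs.
  case: xs => [|x s] /=; first exact: ler01.
  by rewrite mulr_ge0 // path_ge0.
have tot : \sum_(xs : n.+1.-tuple S) traj_prob mu PE xs = 1.
  rewrite sum_tupleS -[RHS]mu1; apply: eq_bigr => x _ /=.
  by rewrite -mulr_sumr path_total // mulr1.
pose Fail := \sum_(xs : n.+1.-tuple S | ~~ (bound <= E xs)) traj_prob mu PE xs.
have Fdec : \sum_(xs : n.+1.-tuple S | bound <= E xs) traj_prob mu PE xs = 1 - Fail.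
  by rewrite -[in RHS]tot [in RHS](bigID (fun xs : n.+1.-tuple S => bound <= E xs)) /= /Fail addrK.
rewrite Fdec.
suff hfail : Fail <= 2 * expR (- (eps ^+ 2 * n.+1%:R) / (45%:R / 10%:R * tau%:R)) by lra.
have Fge0 : 0 <= \sum_(xs : n.+1.-tuple S | bound <= E xs) traj_prob mu PE xs.
  by apply: sumr_ge0.
have Fle1 : Fail <= 1 by lra.
have Fail0 : 0 <= Fail by apply: sumr_ge0.
have Ege0 (xs : n.+1.-tuple S) : 0 <= E xs.
  by apply: sumr_ge0 => y _; rewrite mulr_ge0 ?ler0n.
case: (posnP tau) => [tau0|taupos].
  rewrite tau0 mulr0 invr0 mulr0 expR0 mulr1; lra.
pose c : R := Num.sqrt (8 * #|S|%:R * tau%:R / n.+1%:R).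
have c0 : 0 <= c by apply: sqrtr_ge0.
have bE : bound = 1 - (eps + c) by rewrite /bound /c opprD addrA.
case: (leP 1 (eps + c)) => hm.
  have -> : Fail = 0.
    rewrite /Fail big1 // => xs; rewrite -ltNge => h.
    have := Ege0 xs; lra.
  by rewrite mulr_ge0 ?expR_ge0.
set m := eps + c in bE hm.
have m0 : 0 < m by rewrite /m; lra.
have hex : exists k, 1 <= m * 2 ^+ k.
  have hi : 0 <= m^-1 by rewrite invr_ge0 ltW.
  have hk := archi_boundP hi.
  exists (Num.Def.archi_bound m^-1).
  set k := Num.Def.archi_bound _ in hk *.
  have hk2 : k%:R <= 2 ^+ k :> R by rewrite -natrX ler_nat ltnW // ltn_expl.
  have hmm : m * m^-1 = 1 by rewrite mulfV // gt_eqF.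
  nra.
case: (ex_minnP hex) => l hl hmin.
case: l hl hmin => [|j] hl hmin; first by move: hl; rewrite expr0 mulr1; lra.
have hj : m * 2 ^+ j < 1.
  rewrite ltNge; apply/negP => h; have := hmin j h; by rewrite ltnn.
have hj2 : j.+1%:R <= 2 ^+ j :> R by rewrite -natrX ler_nat ltn_expl.
have ej : j.+1%:R = j%:R + 1 :> R by rewrite -addn1 natrD.
have hjm : (j%:R + 1) * m <= 1 by rewrite -ej; nra.
have hd0 : dev PE rhoES tau 4^-1 by apply: dev_tau; exact: (proj1 hmix).
have hdj := dev_pow Prow hstat j hd0.
have HL : (j.+1 * tau = (j.+1 * tau).-1.+1)%N by rewrite prednK // muln_gt0 taupos.
set L' := (j.+1 * tau).-1 in HL.
rewrite HL in hdj.
set d := (2 ^+ j.+2)^-1 in hdj.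
have d0 : 0 <= d by rewrite invr_ge0 exprn_ge0.
have hd : d <= m / 2.
  have X0 : 0 < 2 ^+ j.+1 :> R by rewrite exprn_gt0.
  have e : 2 ^+ j.+2 * d = 1 by rewrite /d mulfV // expf_neq0 // pnatr_eq0.
  rewrite exprS in e; nra.
set K := (n %/ L'.+1)%N.
have inner (B : {set S}) : m < \sum_(y in B) rhoES y ->
  \sum_(xs : n.+1.-tuple S) traj_prob mu PE xs * (all (fun y => y \notin B) xs)%:R
    <= (1 - m / 2) ^+ K.
  move=> hB; rewrite traj_tuple.
  have rB1 : \sum_(y in B) rhoES y <= 1.
    rewrite -[X in _ <= X]rho1 [X in _ <= X](bigID (mem B)) /= lerDl.
    by apply: sumr_ge0 => y _.
  set q := 1 - (\sum_(y in B) rhoES y - d).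
  have hq0 : 0 <= q by rewrite /q; lra.
  have hq : q <= 1 - m / 2 by rewrite /q; lra.
  have hav x : avoid PE B n x <= q ^+ K.
    have := avoid_pow Pge0 Prow B K (n %% L'.+1) x hdj.
    by rewrite -divn_eq.
  apply: (@le_trans _ _ (\sum_x mu x * q ^+ K)).
    apply: ler_sum => x _; rewrite -mulrA ler_wpM2l //.
    case: (x \in B) => /=; rewrite ?mul0r ?mul1r ?exprn_ge0 //.
  rewrite -mulr_suml mu1 mul1r.
  by apply: lerXn2r; rewrite ?nnegrE //; lra.
have step1 : Fail <= \sum_(xs : n.+1.-tuple S)
    \sum_(B : {set S} | m < \sum_(y in B) rhoES y)
      traj_prob mu PE xs * (all (fun y => y \notin B) xs)%:R.
  apply: sum_filter_le => [xs hxs|xs]; last first.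
    by apply: sumr_ge0 => B _; rewrite mulr_ge0 ?ler0n.
  set B0 := [set s | s \notin xs].
  have hall : all (fun y => y \notin B0) xs by apply/allP => y hy; rewrite inE hy.
  have hB0 : m < \sum_(y in B0) rhoES y.
    have eE : E xs = 1 - \sum_(y in B0) rhoES y.
      rewrite -rho1 -sum_notin /E; apply: eq_bigr => y _; by rewrite inE negbK.
    move: hxs; rewrite -ltNge eE bE; lra.
  rewrite (bigD1 B0) //= hall mulr1 lerDl.
  by apply: sumr_ge0 => B _; rewrite mulr_ge0 ?ler0n.
rewrite exchange_big /= in step1.
have step2 : Fail <= (1 - m / 2) ^+ K *+ #|{set S}|.
  apply: le_trans step1 _; rewrite -sumr_const.
  apply: sum_filter_le => [B hB|B]; first exact: inner.
  by rewrite exprn_ge0 //; lra.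
have cardE : #|{set S}| = (2 ^ #|S|)%N.
  by rewrite -[in LHS]cardsT -powersetT card_powerset cardsT.
rewrite cardE -mulr_natr natrX in step2.
have h1 : (1 - m / 2) ^+ K <= expR (K%:R * - (m / 2)).
  rewrite expRM_natl; apply: lerXn2r; rewrite ?nnegrE ?expR_ge0 //; first lra.
  by have := expR_ge1Dx (- (m / 2)); lra.
have h2 : 2 ^+ #|S| <= expR (#|S|%:R * 1) :> R.
  rewrite expRM_natl; apply: lerXn2r; rewrite ?nnegrE ?expR_ge0 //.
  by have := expR_ge1Dx (1 : R); lra.
have h3 : K%:R * - (m / 2) + #|S|%:R * 1 <=
    - (eps ^+ 2 * n.+1%:R) / (45%:R / 10%:R * tau%:R).
  have hNn : (n.+1 <= K * (j.+1 * tau) + j.+1 * tau)%N.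
    rewrite HL {1}(divn_eq n L'.+1) /K -addnS leq_add2l.
    by rewrite ltn_pmod.
  have hNr : n.+1%:R <= K%:R * (j%:R + 1) * tau%:R + (j%:R + 1) * tau%:R :> R.
    by rewrite -ej -!natrM -natrD ler_nat -mulnA.
  have hc2 : c ^+ 2 * n.+1%:R = 8 * #|S|%:R * tau%:R.
    rewrite sqr_sqrtr ?divfK ?pnatr_eq0 //.
    by rewrite divr_ge0 // !mulr_ge0 ?ler0n.
  have := @num_ineq R eps c m j%:R K%:R tau%:R n.+1%:R #|S|%:R heps c0 erefl.
  have ht : 1 <= tau%:R :> R by rewrite ler1n.
  have hs : 1 <= #|S|%:R :> R by rewrite ler1n.
  move=> /(_ ht hs (ler0n _ _) (ler0n _ _) hjm hNr hc2 (ltr0Sn _ _)).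
  lra.
have h4 : (1 - m / 2) ^+ K * 2 ^+ #|S| <=
    expR (- (eps ^+ 2 * n.+1%:R) / (45%:R / 10%:R * tau%:R)).
  apply: le_trans (_ : expR (K%:R * - (m / 2)) * expR (#|S|%:R * 1) <= _).
    by apply: ler_pM => //; rewrite ?exprn_ge0 //; lra.
  by rewrite -expRD ler_expR.
have := expR_ge0 (- (eps ^+ 2 * n.+1%:R) / (45%:R / 10%:R * tau%:R)).
lra.
Qed.
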